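(* Let $X$ be a real Banach space, let $\{T_n:X\rightrightarrows X^*\}_{n\in\mathbb{N}}$ be a sequence of maximal monotone operators of type (D), and let $(\varepsilon_n)_n$ be any sequence of positive numbers converging to zero. Let $T=\liminf T_n$. Then for $(x,x^* )\in X\times X^*$, $(x,x^* )\in T$ if and only if $x=\lim_n x_n$ (in norm), where for each $n$, $x_n\in X$ is a solution of $x^*\in T_n(x_n)+J_{\varepsilon_n}(x_n-x)$.
   Context: Operators are identified with their graphs; $\langle\cdot,\cdot\rangle$ is the duality pairing and $X\subset X^{**}$ canonically. $T:X\rightrightarrows X^*$ is monotone if $\langle x-y,x^*-y^*\rangle\ge0$ for all $(x,x^* ),(y,y^* )\in T$; maximal monotone if not properly contained in another monotone operator. For maximal monotone $T$, $\widetilde T=\{(x^{**},x^* )\in X^{**}\times X^*: \langle x^{**}-y,x^*-y^*\rangle\ge 0\ \forall (y,y^* )\in T\}$; $T$ is of type (D) if each $(x^{**},x^* )\in\widetilde T$ is the weak$^*\times$norm limit of a bounded net in $T$. $J_\varepsilon=\partial_\varepsilon(\tfrac12\|\cdot\|^2)$: $w^*\in J_\varepsilon(y)$ iff $\tfrac12\|y\|^2+\tfrac12\|w^*\|^2\le\langle y,w^*\rangle+\varepsilon$. (For type (D) operators such solutions $x_n$ always exist.) The sequential lower limit is $\liminf T_n=\{(x,x^* ): \exists (y_n,y_n^* )\in T_n,\ (y_n,y_n^* )\to(x,x^* ) \text{ in the norm}\times\text{norm topology}\}$. The equivalence is understood for any choice of solutions $x_n$. *)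

(* Defs.v *)
(* The dual Xs is represented by the functions [X -> R]
   satisfying [is_dual] (continuous linear functionals); the bidual Xss by the
   functions [(X -> R) -> R] satisfying [is_bidual] (linear and bounded on Xs).
   Operators X ⇉ Xs are identified with their graphs: relations [X -> (X -> R) -> Prop]. *)
From HB Require Import structures.
From mathcomp Require Import all_boot all_order all_algebra.
From mathcomp Require Import all_classical all_reals all_analysis.
Set Implicit Arguments. Unset Strict Implicit. Unset Printing Implicit Defensive.
Import Order.TTheory GRing.Theory Num.Theory.
Import numFieldNormedType.Exports.
Local Open Scope classical_set_scope.
Local Open Scope ring_scope.

Section Banach.
Variables (R : realType) (X : completeNormedModType R).

Definition is_dual (f : X -> R) : Prop :=
  (forall (a : R) (x y : X), f (a *: x + y) = a * f x + f y) /\ continuous f.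

Definition dnorm (f : X -> R) : R :=
  sup [set `|f x| | x in [set x : X | `|x| <= 1]].

Definition is_bidual (phi : (X -> R) -> R) : Prop :=
  (forall (a : R) (f g : X -> R), is_dual f -> is_dual g ->
      phi (fun x => a * f x + g x) = a * phi f + phi g) /\
  (exists C : R, forall f, is_dual f -> `|phi f| <= C * dnorm f).

Definition operator := X -> (X -> R) -> Prop.

Definition is_op (T : operator) : Prop := forall x f, T x f -> is_dual f.

Definition monotone (T : operator) : Prop :=
  is_op T /\
  forall x f y g, T x f -> T y g -> 0 <= f (x - y) - g (x - y).

Definition maximal_monotone (T : operator) : Prop :=
  monotone T /\
  forall S : operator, monotone S -> (forall x f, T x f -> S x f) ->
    forall x f, S x f -> T x f.

Definition tilde (T : operator) (phi : (X -> R) -> R) (f : X -> R) : Prop :=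
  is_bidual phi /\ is_dual f /\
  forall y g, T y g ->
    0 <= phi (fun z => f z - g z) - (f y - g y).

Definition directed (I : Type) (le : I -> I -> Prop) : Prop :=
  (exists i : I, True) /\ (forall i, le i i) /\
  (forall i j k, le i j -> le j k -> le i k) /\
  (forall i j, exists k, le i k /\ le j k).

Definition net_cvg (I : Type) (le : I -> I -> Prop) (u : I -> R) (l : R) : Prop :=
  forall e : R, 0 < e -> exists i0, forall i, le i0 i -> `|u i - l| < e.

(* type (D): every element of tilde T is the weak-star × norm limit of a bounded
   net in T (X embedded in Xss canonically: x ↦ (f ↦ f x)) *)
Definition type_D (T : operator) : Prop :=
  forall phi f, tilde T phi f ->
  exists (I : Type) (le : I -> I -> Prop) (xs : I -> X) (fs : I -> X -> R),
    [/\ directed le,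
        (forall i, T (xs i) (fs i)),
        (exists M : R, forall i, `|xs i| <= M /\ dnorm (fs i) <= M),
        (forall g, is_dual g -> net_cvg le (fun i => g (xs i)) (phi g)) &
        net_cvg le (fun i => dnorm (fun z => fs i z - f z)) 0].

Definition J_eps (eps : R) (y : X) (w : X -> R) : Prop :=
  is_dual w /\ `|y| ^+ 2 / 2 + dnorm w ^+ 2 / 2 <= w y + eps.

Definition liminf_op (Ts : nat -> operator) : operator :=
  fun x f => exists (ys : nat -> X) (gs : nat -> X -> R),
    [/\ (forall n, Ts n (ys n) (gs n)),
        ys @ \oo --> x &
        (fun n => dnorm (fun z => gs n z - f z)) @ \oo --> (0 : R)].

End Banach.

(* Main.v *)
Require Import Defs.
From HB Require Import structures.
From mathcomp Require Import all_boot all_order all_algebra.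
From mathcomp Require Import all_classical all_reals all_analysis.
From mathcomp Require Import ring lra.
Import Order.TTheory GRing.Theory Num.Theory.
Import numFieldNormedType.Exports.
Local Open Scope classical_set_scope.
Local Open Scope ring_scope.

Section Aux.
Variables (R : realType) (X : completeNormedModType R).
Set Implicit Arguments.

Lemma lin0 (h : X -> R) : is_dual h -> h 0 = 0.
Proof.
case=> L _; have := L 1 0 0; rewrite scaler0 addr0 mul1r => E.
lra.
Qed.

Lemma linZ (h : X -> R) a x : is_dual h -> h (a *: x) = a * h x.
Proof. move=> hd; have := hd.1 a x 0; rewrite addr0 lin0 // addr0 => ->. by []. Qed.

Lemma linD (h : X -> R) x y : is_dual h -> h (x + y) = h x + h y.
Proof. by move=> hd; have := hd.1 1 x y; rewrite scale1r mul1r. Qed.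

Lemma linB (h : X -> R) x y : is_dual h -> h (x - y) = h x - h y.
Proof.
move=> hd; rewrite linD // -scaleN1r linZ //; lra.
Qed.

Lemma dual_ub (h : X -> R) : is_dual h ->
  has_ubound [set `|h x| | x in [set x : X | `|x| <= 1]].
Proof.
move=> hd; have := hd.2 0 => /cvgrPdist_lt /(_ 1 ltr01); rewrite lin0 //.
case/nbhs_norm0P=> e /= e0 He.
have e2 : 0 < e / 2 by rewrite divr_gt0.
exists (2 / e) => _ [x /= x1 <-].
have : `|(e / 2) *: x| < e.
  rewrite normrZ (gtr0_norm e2).
  have : e / 2 * `|x| <= e / 2 by rewrite ler_piMr // ltW.
  lra.
move/He; rewrite sub0r normrN linZ // normrM (gtr0_norm e2) => H.
rewrite ler_pdivlMr //. 
have : `|h x| * e < 2 by lra.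
lra.
Qed.

Lemma dnorm_ge0 (h : X -> R) : is_dual h -> 0 <= dnorm h.
Proof.
move=> hd; have /(_ 0) H := ub_le_sup (dual_ub hd); apply: H; exists 0 => /=.
  by rewrite normr0.
by rewrite lin0 // normr0.
Qed.

Lemma dnorm_le (h : X -> R) x : is_dual h -> `|h x| <= dnorm h * `|x|.
Proof.
move=> hd; have [->|x0] := eqVneq x 0.
  by rewrite lin0 // !normr0 mulr0.
have nx : 0 < `|x| by rewrite normr_gt0.
have : `|h (`|x|^-1 *: x)| <= dnorm h.
  have /(_ (`|h (`|x|^-1 *: x)|)) H := ub_le_sup (dual_ub hd); apply: H.
  exists (`|x|^-1 *: x) => //=.
  by rewrite normrZ normfV normr_id mulVf ?gt_eqF.
rewrite linZ // normrM normfV normr_id -ler_pdivlMl ?invr_gt0 // invrK.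
by rewrite mulrC.
Qed.

Lemma is_dual_sub (g f : X -> R) : is_dual g -> is_dual f ->
  is_dual (fun z => g z - f z).
Proof.
move=> gd fd; split.
  by move=> a x y; rewrite gd.1 fd.1; ring.
by move=> x; apply: (continuousB (gd.2 x) (fd.2 x)).
Qed.

Lemma dnorm_neg (h w : X -> R) : (forall z, h z = - w z) -> dnorm h = dnorm w.
Proof.
move=> H; rewrite /dnorm; congr sup; rewrite funeqE => r; apply: propext.
by split; case=> y Hy <-; exists y => //; rewrite H normrN.
Qed.

Lemma sq_cvg0 (a d t e : nat -> R) :
  (forall n, a n ^+ 2 <= 4 * d n ^+ 2 + 4 * d n * t n + 2 * t n ^+ 2 + 4 * e n) ->
  d @ \oo --> 0 -> t @ \oo --> 0 -> e @ \oo --> 0 -> a @ \oo --> 0.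
Proof.
move=> H /cvgr0Pnorm_lt cd /cvgr0Pnorm_lt ct /cvgr0Pnorm_lt ce.
apply/cvgr0Pnorm_lt => ep ep0.
pose s := Num.min 1 (ep ^+ 2 / 14).
have s0 : 0 < s by rewrite lt_min ltr01 divr_gt0 // exprn_gt0.
have s1 : s <= 1 by rewrite ge_min lexx.
have s2 : s <= ep ^+ 2 / 14 by rewrite ge_min lexx orbT.
near=> n.
have /ltr_normlP [d1 d2] : `|d n| < s by near: n; exact: cd.
have /ltr_normlP [t1 t2] : `|t n| < s by near: n; exact: ct.
have /ltr_normlP [e1 e2] : `|e n| < s by near: n; exact: ce.
have Hn := H n.
have dd : d n ^+ 2 < s ^+ 2 by nra.
have tt : t n ^+ 2 < s ^+ 2 by nra.
have dt : d n * t n <= s ^+ 2 by nra.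
have ss : s ^+ 2 <= s by nra.
have aa : a n ^+ 2 < ep ^+ 2 by nra.
apply/ltr_normlP; split; nra.
Unshelve. all: by end_near.
Qed.

End Aux.
Unset Implicit Arguments.

Lemma norm_cvg0 (R : realType) (X : completeNormedModType R) (u : nat -> X) (x : X) :
  u @ \oo --> x <-> (fun n => `|u n - x|) @ \oo --> (0 : R).
Proof.
split.
  move/cvgrPdistC_lt => H; apply/cvgr0Pnorm_lt => e e0.
  by apply: filterS (H e e0) => n; rewrite normr_id.
move/cvgr0Pnorm_lt => H; apply/cvgrPdistC_lt => e e0.
by apply: filterS (H e e0) => n; rewrite normr_id.
Qed.

Theorem proposition3p2 (R : realType) (X : completeNormedModType R)
  (Ts : nat -> operator X) (eps : nat -> R) :
  (forall n, maximal_monotone (Ts n)) ->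
  (forall n, type_D (Ts n)) ->
  (forall n, 0 < eps n) ->
  eps @ \oo --> (0 : R) ->
  forall (x : X) (f : X -> R), is_dual f ->
  forall xs : nat -> X,
    (forall n, exists g w, [/\ Ts n (xs n) g, J_eps (eps n) (xs n - x) w &
                              f = (fun z => g z + w z)]) ->
    (liminf_op Ts x f <-> xs @ \oo --> x).
Proof.
move=> Hmax _ Hep Heps x f fd xs Hxs.
have H2 : forall n, exists p : (X -> R) * (X -> R),
    [/\ Ts n (xs n) p.1, J_eps (eps n) (xs n - x) p.2 &
       f = (fun z => p.1 z + p.2 z)].
  by move=> n; have [g [w H]] := Hxs n; exists (g, w).
have [G HG] := choice H2.
split.
  case=> ys [gs] [Hys Hyc Hgc].
  apply/norm_cvg0.
  apply: (@sq_cvg0 R _ (fun n => dnorm (fun z => gs n z - f z))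
                  (fun n => `|ys n - x|) eps) => //; last first.
    exact: (proj1 (@norm_cvg0 R X ys x) Hyc).
  move=> n; move: (HG n); case: (G n) => g w /= [Tg [wd Jw] Hf].
  have gsd : is_dual (gs n) := (Hmax n).1.1 _ _ (Hys n).
  have hd := is_dual_sub gsd fd.
  have mono := (Hmax n).1.2 _ _ _ _ Tg (Hys n).
  have fv : f (xs n - ys n) = g (xs n - ys n) + w (xs n - ys n) by rewrite Hf.
  have /ler_normlP [l1 l2] := dnorm_le (xs n - ys n) hd.
  have tri : `|xs n - ys n| <= `|xs n - x| + `|ys n - x|.
    have -> : xs n - ys n = (xs n - x) - (ys n - x) by rewrite opprB addrA subrK.
    exact: ler_normB.
  have d0 := dnorm_ge0 hd.
  have sp : w (xs n - x) = w (xs n - ys n) + w (ys n - x).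
    by rewrite -linD // addrA subrK.
  have /ler_normlP [m1 m2] := dnorm_le (ys n - x) wd.
  have w0 := dnorm_ge0 wd.
  move: Jw; rewrite sp => Jw.
  set A := `|xs n - x| in tri Jw *.
  set D := dnorm _ in l1 l2 d0 *.
  set Et := `|ys n - x| in tri m1 m2 *.
  set Bw := dnorm w in m1 m2 w0 Jw.
  have k0 : D * `|xs n - ys n| <= D * (A + Et) by rewrite ler_wpM2l.
  have k1 : A ^+ 2 / 2 + Bw ^+ 2 / 2 <= D * (A + Et) + Bw * Et + eps n.
    move: l1 l2 m1 m2 mono fv Jw k0 => /=; lra.
  have q1 : 0 <= (Bw - Et) ^+ 2 by rewrite sqr_ge0.
  have q2 : 0 <= (A - 2 * D) ^+ 2 by rewrite sqr_ge0.
  move: q1 q2 k1; rewrite !expr2; lra.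
move=> Hc.
exists xs, (fun n => (G n).1); split => //.
  by move=> n; case: (HG n).
apply: (@sq_cvg0 R _ (fun n => `|xs n - x|) (fun _ => 0) eps) => //.
- move=> n; move: (HG n); case: (G n) => g w /= [Tg [wd Jw] Hf].
  rewrite (@dnorm_neg R X _ w); last by move=> z; rewrite Hf /=; ring.
  have /ler_normlP [m1 m2] := dnorm_le (xs n - x) wd.
  have w0 := dnorm_ge0 wd.
  set A := `|xs n - x| in m1 m2 Jw *.
  set Bw := dnorm w in m1 m2 w0 Jw *.
  have q : 0 <= (Bw - 2 * A) ^+ 2 by rewrite sqr_ge0.
  have a0 : 0 <= A ^+ 2 by rewrite sqr_ge0.
  move: q a0 Jw m1 m2; rewrite !expr2; lra.
- exact: (proj1 (@norm_cvg0 R X xs x) Hc).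
- exact: cvg_cst.
Qed.
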